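(* Let $C>0$, $\mathbf{w}^t\in\mathbb{R}^d$, let $\theta_1^t\le\dots\le\theta_{K-1}^t$ be real thresholds, $\mathbf{x}^t\in\mathbb{R}^d$ and integers $1\le y_l^t\le y_r^t\le K$; let $I_t=\{1,\dots,y_l^t-1\}\cup\{y_r^t,\dots,K-1\}$. Let $(\mathbf{w}^{t+1},\boldsymbol\theta^{t+1})$ be the PA-II update, i.e. the $(\mathbf{w},\boldsymbol\theta)$-part of the minimizer over $\mathbf{w}\in\mathbb{R}^d$, $\boldsymbol\theta\in\mathbb{R}^{K-1}$, $(\xi_i)_{i\in I_t}\in\mathbb{R}^{I_t}$ of $$\tfrac12\Vert\mathbf{w}-\mathbf{w}^t\Vert^2+\tfrac12\Vert\boldsymbol\theta-\boldsymbol\theta^t\Vert^2+C\sum_{i\in I_t}\xi_i^2$$ subject to $\mathbf{w}\cdot\mathbf{x}^t-\theta_i\ge 1-\xi_i$ for $i=1,\dots,y_l^t-1$ and $\mathbf{w}\cdot\mathbf{x}^t-\theta_i\le -1+\xi_i$ for $i=y_r^t,\dots,K-1$. Then $\theta_1^{t+1}\le\theta_2^{t+1}\le\dots\le\theta_{K-1}^{t+1}$.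
   Context: Online ranking into $K$ ordered classes with interval labels $[y_l^t,y_r^t]$: a ranker is $(\mathbf{w},\boldsymbol\theta)$, $\boldsymbol\theta=(\theta_1,\dots,\theta_{K-1})$, predicting $\min\{i:\mathbf{w}\cdot\mathbf{x}-\theta_i<0\}$ with $\theta_K=\infty$. PA-II is the passive-aggressive variant with squared slack penalty and parameter $C$ that at each trial computes the exact solution of the stated convex program. *)

(* Defs.v *)
From HB Require Import structures.
From mathcomp Require Import all_boot all_order all_algebra.
Set Implicit Arguments. Unset Strict Implicit. Unset Printing Implicit Defensive.
Import Order.TTheory GRing.Theory Num.Theory.
Local Open Scope ring_scope.

Definition dotv (R : realFieldType) (d : nat) (u v : 'rV[R]_d) : R :=
  \sum_(j < d) u 0 j * v 0 j.

(* Thresholds theta_1..theta_{K-1} are stored in 'rV_(K.-1); the ordinal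
   i : 'I_(K.-1) stands for the (1-based) index i.+1. *)

Definition inI (K yl yr : nat) (i : 'I_(K.-1)) : bool :=
  ((i.+1 < yl)%N || (yr <= i.+1)%N).

Definition pa2_feasible (R : realFieldType) (d K yl yr : nat) (x : 'rV[R]_d)
    (w : 'rV[R]_d) (th : 'rV[R]_(K.-1)) (xi : 'I_(K.-1) -> R) : Prop :=
  forall i : 'I_(K.-1),
    ((i.+1 < yl)%N -> dotv w x - th 0 i >= 1 - xi i) /\
    ((yr <= i.+1)%N -> dotv w x - th 0 i <= -1 + xi i).

Definition pa2_obj (R : realFieldType) (d K yl yr : nat) (C : R)
    (wt : 'rV[R]_d) (tht : 'rV[R]_(K.-1))
    (w : 'rV[R]_d) (th : 'rV[R]_(K.-1)) (xi : 'I_(K.-1) -> R) : R :=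
  2^-1 * dotv (w - wt) (w - wt) + 2^-1 * dotv (th - tht) (th - tht)
  + C * \sum_(i < K.-1 | @inI K yl yr i) xi i ^+ 2.

Definition pa2_update (R : realFieldType) (d K yl yr : nat) (C : R)
    (wt : 'rV[R]_d) (tht : 'rV[R]_(K.-1)) (x : 'rV[R]_d)
    (w' : 'rV[R]_d) (th' : 'rV[R]_(K.-1)) : Prop :=
  exists xi' : 'I_(K.-1) -> R,
    @pa2_feasible R d K yl yr x w' th' xi' /\
    forall (w : 'rV[R]_d) (th : 'rV[R]_(K.-1)) (xi : 'I_(K.-1) -> R),
      @pa2_feasible R d K yl yr x w th xi ->
      @pa2_obj R d K yl yr C wt tht w' th' xi' <= @pa2_obj R d K yl yr C wt tht w th xi.

(* Main.v *)
Require Import Defs.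
From HB Require Import structures.
From mathcomp Require Import all_boot all_order all_algebra.
From mathcomp Require Import zify lra.
Import Order.TTheory GRing.Theory Num.Theory.
Local Open Scope ring_scope.

Lemma sum2 (R : realFieldType) n (P : pred 'I_n) (F : 'I_n -> R) (i j : 'I_n) :
  i != j -> P i -> P j ->
  \sum_(k < n | P k) F k = F i + F j + \sum_(k < n | P k && (k != i) && (k != j)) F k.
Proof.
move=> nij Pi Pj.
rewrite (bigD1 i) //= (bigD1 j) /=; last by rewrite Pj eq_sym.
by rewrite addrA.
 
Qed.

Lemma sum2T (R : realFieldType) n (F : 'I_n -> R) (i j : 'I_n) :
  i != j ->
  \sum_(k < n) F k = F i + F j + \sum_(k < n | (k != i) && (k != j)) F k.
Proof.
move=> nij; rewrite (@sum2 R n xpredT F i j nij) //.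
Qed.

Theorem theorem3 (R : realFieldType) (d K yl yr : nat) (C : R)
    (wt : 'rV[R]_d) (tht : 'rV[R]_(K.-1)) (x : 'rV[R]_d)
    (w' : 'rV[R]_d) (th' : 'rV[R]_(K.-1)) :
  0 < C ->
  (1 <= yl)%N -> (yl <= yr)%N -> (yr <= K)%N ->
  (forall i j : 'I_(K.-1), (i <= j)%N -> tht 0 i <= tht 0 j) ->
  @pa2_update R d K yl yr C wt tht x w' th' ->
  forall i j : 'I_(K.-1), (i <= j)%N -> th' 0 i <= th' 0 j.
Proof.
move=> C0 h1 h2 h3 mono [xi' [feas opt]] i j lij.
rewrite leNgt; apply/negP => lt.
have nij : i != j by apply/eqP => E; move: lt; rewrite E ltxx.
have lij' : (i < j)%N by rewrite ltn_neqAle lij andbT; apply: contra nij => /eqP E; apply/eqP/val_inj.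
set a : R := th' 0 i; set b : R := th' 0 j; set m := (a + b) / 2.
have ab : b < a by [].
have mE : m = (a + b) / 2 by [].
set cond := ((j.+1 < yl)%N || (yr <= i.+1)%N).
set avg := (xi' i + xi' j) / 2.
pose th := \row_(k < K.-1) (if (k == i) || (k == j) then m else th' 0 k).
pose xi := fun k : 'I_(K.-1) => if cond && ((k == i) || (k == j)) then avg else xi' k.
have thE k : th 0 k = (if (k == i) || (k == j) then m else th' 0 k) by rewrite mxE.
set s := dotv w' x; rewrite -/s in feas opt.
have [Hi1 Hi2] := feas i; have [Hj1 Hj2] := feas j.
have F : @pa2_feasible R d K yl yr x w' th xi.
  move=> k; rewrite thE /xi -/s.
  have [Hk1 Hk2] := feas k; rewrite -/s in Hk1 Hk2.
  case: (eqVneq k i) => [->|nki] /=.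
    rewrite andbT /cond; split => hk.
      case: (ltnP j.+1 yl) => hj /=.
        rewrite /m /avg; move: (Hi1 hk) (Hj1 hj); rewrite -/s -/a -/b; lra.
      have -> : (yr <= i.+1)%N = false by apply/negbTE; rewrite -ltnNge; apply: (leq_trans hk); apply: leq_trans h2; done.
      rewrite /m; have := Hi1 hk; rewrite -/s -/a => ?; lra.
    rewrite hk orbT /m /avg; move: (Hi2 hk) (Hj2 ltac:(lia)); rewrite -/s -/a -/b; lra.
  case: (eqVneq k j) => [->|nkj] /=.
    rewrite andbT /cond; split => hk.
      rewrite hk /= /m /avg; move: (Hi1 ltac:(lia)) (Hj1 hk); rewrite -/s -/a -/b; lra.
    case: (leqP yr i.+1) => hi /=.
      rewrite orbT /m /avg; move: (Hi2 hi) (Hj2 hk); rewrite -/s -/a -/b; lra.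
    have -> : (j.+1 < yl)%N = false by apply/negbTE; rewrite -leqNgt; lia.
    rewrite /m; move: (Hj2 hk); rewrite -/s -/b => /= ?; lra.
  by rewrite andbF.
have := opt _ _ _ F; apply/negP; rewrite -ltNge.
rewrite /pa2_obj; apply: ltr_leD.
- rewrite ltrD2l ltr_pM2l ?invr_gt0 ?ltr0n //.
  rewrite /dotv (@sum2T R _ _ i j nij) (@sum2T R _ (fun k => (th' - tht) 0 k * (th' - tht) 0 k) i j nij).
  rewrite (eq_bigr (fun k => (th' - tht) 0 k * (th' - tht) 0 k)); last first.
    move=> k /andP [/negbTE ki /negbTE kj]; by rewrite !mxE ki kj.
  rewrite ltrD2r !mxE !eqxx orbT /= -/a -/b.
  have := mono i j lij; move: (tht 0 i) (tht 0 j) => p q pq.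
  rewrite mE; nra.
- rewrite ler_pM2l //.
  case cnd: cond.
    have Ii : inI yl yr i by rewrite /inI; move: cnd; rewrite /cond; lia.
    have Ij : inI yl yr j by rewrite /inI; move: cnd; rewrite /cond; lia.
    rewrite (@sum2 R _ _ _ i j nij Ii Ij) (@sum2 R _ _ (fun k => xi' k ^+ 2) i j nij Ii Ij).
    rewrite (eq_bigr (fun k => xi' k ^+ 2)); last first.
      move=> k /andP [/andP [_ /negbTE ki] /negbTE kj]; by rewrite /xi ki kj andbF.
    rewrite lerD2r /xi cnd !eqxx orbT /= /avg; have := sqr_ge0 (xi' i - xi' j); move: (xi' i) (xi' j) => u v h; rewrite !expr2 in h *; nra.
  apply: ler_sum => k _; by rewrite /xi cnd.
Qed.
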